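(* Fix $H\in(3/4,1)$, $\mu\in\mathbb{R}$, $\sigma>0$. For $\alpha>0$ let $Q^{\alpha}$ be the law on $\mathcal{C}[0,1]$ of $\alpha Z^H_t+B_t$, $t\in[0,1]$, where $B$ is a standard Brownian motion and $Z^H$ an independent fractional Brownian motion with Hurst parameter $H$, and let $Q_{\mu\alpha/\sigma}$ be the law on $\mathcal{C}[0,1]$ of $W_t-\frac{\mu\alpha}{\sigma}t$, $W$ a standard Brownian motion. For $n\ge1$ let $Y_n(\omega)=(\omega(\tfrac1n)-\omega(0),\dots,\omega(1)-\omega(\tfrac{n-1}n))^T$ and let $Q^{\alpha,n}$, $Q^n_{\mu\alpha/\sigma}$ be the restrictions of $Q^\alpha$, $Q_{\mu\alpha/\sigma}$ to $\sigma(Y_n)$. Then for each $n>1$, $(Q^{\alpha,n})_{\alpha>0}$ is entirely asymptotically separable from $(Q^n_{\mu\alpha/\sigma})_{\alpha>0}$ as $\alpha\to\infty$: there exist $\alpha_k\to\infty$ and sets $A^k\in\sigma(Y_n)$ with $\lim_{k\to\infty}Q^{\alpha_k,n}(A^k)=1$ and $\lim_{k\to\infty}Q^n_{\mu\alpha_k/\sigma}(A^k)=0$.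
   Context: A fractional Brownian motion with Hurst parameter $H$ is a continuous centred Gaussian process with covariance $\frac12(t^{2H}+s^{2H}-|t-s|^{2H})$. *)

(* Defs.v *)
From HB Require Import structures.
From mathcomp Require Import all_boot all_order all_algebra.
From mathcomp Require Import all_classical all_reals all_analysis.
From mathcomp Require Import normal_distribution.
Set Implicit Arguments. Unset Strict Implicit. Unset Printing Implicit Defensive.
Import Order.TTheory GRing.Theory Num.Theory.
Import numFieldNormedType.Exports.
Local Open Scope classical_set_scope.
Local Open Scope ring_scope.

Definition centered_gauss {R : realType} (v : R) : set R -> \bar R :=
  fun A => if v == 0 then \d_(0:R) A else normal_prob 0 (Num.sqrt v) A.

Definition cont_centered_gaussian_process d (T : measurableType d)
    (R : realType) (P : probability T R) (X : R -> T -> R) (c : R -> R -> R) :=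
  [/\ (forall t, t \in `[0, 1] -> measurable_fun setT (X t)),
      (forall w, {within `[0, 1], continuous (fun t => X t w)}) &
      (forall (k : nat) (ts : 'I_k -> R) (a : 'I_k -> R),
        (forall i, ts i \in `[0, 1]) ->
        forall A : set R, measurable A ->
        P ((fun w => \sum_(i < k) a i * X (ts i) w) @^-1` A) =
        centered_gauss (\sum_(i < k) \sum_(j < k) a i * a j * c (ts i) (ts j)) A)].

Definition std_brownian_motion d (T : measurableType d) (R : realType)
    (P : probability T R) (B : R -> T -> R) :=
  cont_centered_gaussian_process P B (fun s t => Num.min s t).

Definition fbm_cov {R : realType} (H : R) (t s : R) : R :=
  (t `^ (2 * H) + s `^ (2 * H) - `|t - s| `^ (2 * H)) / 2.

Definition frac_brownian_motion d (T : measurableType d) (R : realType)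
    (P : probability T R) (H : R) (Z : R -> T -> R) :=
  cont_centered_gaussian_process P Z (fbm_cov H).

(* Independence of the processes X and Y (indexed by [0,1]): product rule on
   finite-dimensional cylinder events (a pi-system generating the two
   sigma-algebras). *)
Definition independent_processes d (T : measurableType d) (R : realType)
    (P : probability T R) (X Y : R -> T -> R) :=
  forall (k : nat) (ts : 'I_k -> R) (A C : 'I_k -> set R),
    (forall i, ts i \in `[0, 1]) ->
    (forall i, measurable (A i)) -> (forall i, measurable (C i)) ->
    P ((\bigcap_(i in [set: 'I_k]) (X (ts i) @^-1` A i)) `&`
       (\bigcap_(i in [set: 'I_k]) (Y (ts i) @^-1` C i))) =
    (P (\bigcap_(i in [set: 'I_k]) (X (ts i) @^-1` A i)) *
     P (\bigcap_(i in [set: 'I_k]) (Y (ts i) @^-1` C i)))%E.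

Definition incr {R : realType} (n : nat) (i : 'I_n) (w : R -> R) : R :=
  w (i.+1%:R / n%:R) - w (i%:R / n%:R).

Definition sigmaY {R : realType} (n : nat) : set (set (R -> R)) :=
  g_sigma_preimage (@incr R n).

(* Main.v *)
Set Warnings "-notation-overridden,-ambiguous-paths,-notation-incompatible-prefix".
Require Import Defs.
From HB Require Import structures.
From mathcomp Require Import all_boot all_order all_algebra.
From mathcomp Require Import all_classical all_reals all_analysis.
From mathcomp Require Import normal_distribution.
From mathcomp Require Import lra ring.
Import Order.TTheory GRing.Theory Num.Theory.
Import numFieldNormedType.Exports.
Local Open Scope classical_set_scope.
Local Open Scope ring_scope.

Lemma mset_gt d (T : measurableType d) (R : realType) (f : T -> R) (a : R) :
  measurable_fun setT f -> measurable [set w | a < f w].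
Proof.
move=> mf; have := mf measurableT _ (measurable_itv `]a, +oo[).
by rewrite setTI; congr measurable; apply/seteqP; split => w /=; rewrite in_itv /= andbT.
Qed.

Lemma mset_le d (T : measurableType d) (R : realType) (f : T -> R) (a : R) :
  measurable_fun setT f -> measurable [set w | f w <= a].
Proof.
move=> mf; have := mf measurableT _ (measurable_itv `]-oo, a]).
by rewrite setTI; congr measurable; apply/seteqP; split => w /=; rewrite in_itv /=.
Qed.

Lemma tail_cvg d (T : measurableType d) (R : realType) (P : probability T R)
  (X : T -> R) : measurable_fun setT X ->
  (fun k : nat => P [set w | k%:R < `|X w|]) @ \oo --> 0%E.
Proof.
move=> mX.
have mA : measurable_fun setT (fun w => `|X w|) by exact: measurableT_comp.
have := @nonincreasing_cvg_mu _ _ _ P (fun k : nat => [set w | k%:R < `|X w|]).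
have -> : \bigcap_k [set w | k%:R < `|X w|] = set0.
  apply/seteqP; split => // w /= /(_ (Num.bound `|X w|) I) /= h; move: h.
  by rewrite ltNge (ltW (archi_boundP _)).
rewrite measure0; apply.
- by rewrite (le_lt_trans (probability_le1 _ _)) ?ltry//; exact: mset_gt.
- by move=> i; exact: mset_gt.
- by [].
- move=> i j ij; apply/subsetPset => w /=; apply: le_lt_trans; by rewrite ler_nat.
Qed.

Lemma ball_cvg d (T : measurableType d) (R : realType) (P : probability T R)
  (X : T -> R) (a : R) : measurable_fun setT X -> P (X @^-1` [set a]) = 0%E ->
  (fun k : nat => P [set w | `|X w - a| <= 2 / k.+1%:R]) @ \oo --> 0%E.
Proof.
move=> mX Pa.
have mA : measurable_fun setT (fun w => `|X w - a|).
  by apply: measurableT_comp => //; exact: measurable_realfun.measurable_funB.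
have := @nonincreasing_cvg_mu _ _ _ P (fun k : nat => [set w | `|X w - a| <= 2 / k.+1%:R]).
have -> : \bigcap_k [set w | `|X w - a| <= 2 / k.+1%:R] = X @^-1` [set a].
  apply/seteqP; split => w /=; last first.
    by move=> /= Xa k _ /=; rewrite Xa subrr normr0 divr_ge0.
  move=> H; apply/eqP; rewrite -subr_eq0 -normr_eq0; apply/negPn/negP => r0.
  have r0' : 0 < `|X w - a| by rewrite lt_def r0 normr_ge0.
  pose k := Num.bound (2 / `|X w - a|).
  have := H k I; rewrite /= ler_pdivlMr // => h1.
  have h2 := archi_boundP (ltW (divr_gt0 (ltr0n _ 2) r0')).
  rewrite ltr_pdivrMr // in h2.
  have h3 : (k%:R : R) <= k.+1%:R by rewrite ler_nat.
  rewrite -/k in h2; move: h1 h2 h3 r0'.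
  generalize (k.+1%:R : R) (k%:R : R) `|X w - a|; clear => x y z *; nra.
move=> hc; rewrite -Pa; apply: hc.
- by rewrite (le_lt_trans (probability_le1 _ _)) ?ltry//; exact: mset_le.
- by move=> i; exact: mset_le.
- by have := mX measurableT _ (measurable_set1 a); rewrite setTI.
- move=> i j ij; apply/subsetPset => w /= h; apply: (le_trans h).
  by rewrite ler_pM2l // lef_pV2 ?posrE// ler_nat.
Qed.

Lemma zinc_atom d (T : measurableType d) (R : realType) (P : probability T R)
  (H : R) (Z : R -> T -> R) (t x : R) : 0 < H -> 0 < t <= 1 ->
  frac_brownian_motion P H Z ->
  P ((fun w => Z t w - Z 0 w) @^-1` [set x]) = 0%E.
Proof.
move=> H0 /andP[t0 t1] [_ _ hZ].
pose ts := fun i : 'I_2 => if val i == 0%N then t else 0.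
pose a := fun i : 'I_2 => if val i == 0%N then 1 else -1 : R.
have hts : forall i, ts i \in `[0, 1].
  move=> i; rewrite /ts; case: ifP => _; rewrite in_itv /= ?lexx ?ler01 //.
  by rewrite ltW.
have := hZ 2%N ts a hts [set x] (measurable_set1 x).
have -> : (fun w => \sum_(i < 2) a i * Z (ts i) w) = (fun w => Z t w - Z 0 w).
  by apply: funext => w; rewrite !big_ord_recl big_ord0 /a /ts /= mul1r mulN1r addr0.
move=> ->.
rewrite !big_ord_recl !big_ord0 /a /ts /= /fbm_cov.
have H2 : 2 * H != 0 by rewrite mulf_neq0 // gt_eqF.
rewrite subrr !subr0 !sub0r normrN normr0 powR0 // ger0_norm ?(ltW t0) //.
set v := (X in centered_gauss X).
have -> : v = t `^ (2 * H).
  by rewrite /v; field.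
rewrite /centered_gauss.
have vn : (t `^ (2 * H) == 0) = false by rewrite powR_eq0 gt_eqF.
case: ifP => [/eqP/powR_eq0_eq0 t00|_]; first by move: t0; rewrite t00 ltxx.
have nul : (@lebesgue_measure R).-null_set [set x].
  move=> A mA Ax; apply/eqP; rewrite eq_le measure_ge0 andbT.
  by rewrite -(lebesgue_measure_set1 x) le_measure // inE.
exact: (@normal_prob_dominates R 0 _ [set x] nul [set x] (measurable_set1 x) (@subset_refl _ _)).
Qed.

Lemma arith_aux (R : realFieldType) (x z : R) : 0 <= x -> 0 <= z ->
  (x + 1) ^+ 2 * z <= 2 * x -> z * (x + 1) <= 2.
Proof.
move=> x0 z0 h2; rewrite expr2 in h2; rewrite leNgt; apply/negP => h.
have x1 : 0 < x + 1 by lra.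
have : (x + 1) * 2 < (x + 1) * (z * (x + 1)) by rewrite ltr_pM2l.
nra.
Qed.

Theorem lemma3p9 (R : realType) (H mu sigma : R) (n : nat)
    (d d' : measure_display) (T : measurableType d) (T' : measurableType d')
    (P : probability T R) (P' : probability T' R)
    (B Z : R -> T -> R) (W : R -> T' -> R) :
  3 / 4 < H < 1 -> 0 < sigma -> (1 < n)%N ->
  std_brownian_motion P B -> frac_brownian_motion P H Z ->
  independent_processes P B Z ->
  std_brownian_motion P' W ->
  exists (alpha : nat -> R) (A : nat -> set (R -> R)),
    [/\ (forall k, 0 < alpha k),
        alpha @ \oo --> +oo,
        (forall k, sigmaY n (A k)),
        (fun k => P ((fun w t => alpha k * Z t w + B t w) @^-1` A k))
          @ \oo --> 1%E &
        (fun k => P' ((fun w t => W t w - mu * alpha k / sigma * t) @^-1` A k))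
          @ \oo --> 0%E].
Proof.
move=> /andP[H34 H1] s0 n1 hB hZ _ hW.
have H0 : 0 < H by apply: lt_trans H34; rewrite divr_gt0.
have n0 : (0 < n)%N by apply: ltn_trans n1.
pose i0 : 'I_n := Ordinal n0.
pose t1 : R := (0.+1)%:R / n%:R.
have t1P : 0 < t1 <= 1.
  rewrite divr_gt0 ?ltr0n //= ler_pdivrMr ?ltr0n // mul1r ler1n //.
have incrE w : incr i0 w = w t1 - w 0.
  by rewrite /incr /= mul0r.
have t0I : (0 : R) \in `[0, 1] by rewrite in_itv /= lexx ler01.
have t1I : t1 \in `[0, 1] by rewrite in_itv /= ltW ?(andP t1P).1 ?(andP t1P).2.
pose alpha k : R := (k.+1%:R) ^+ 2.
pose gam : R := mu / sigma * t1.
pose beta k : R := alpha k * gam.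
pose A k := [set w : R -> R | k%:R < `|incr i0 w + beta k|].
exists alpha, A; split.
- by move=> k; rewrite exprn_gt0 // ltr0n.
- apply: (ger_cvgy _ cvgr_idn); apply: filterE => k.
  by rewrite /alpha -natrX ler_nat; apply: leq_trans (leqnSn k) _; by rewrite expnS expn1 leq_pmulr.
- move=> k; apply: sub_sigma_algebra.
  rewrite (bigD1 i0) //=; left.
  exists [set y : R | k%:R < `|y + beta k|].
    apply: (@mset_gt _ _ _ (fun y : R => `|y + beta k|)).
    apply: measurableT_comp => //.
    exact: measurable_realfun.measurable_funD.
  by rewrite setTI.
- have [mZ _ _] := hZ; case: hB => mB _ _.
  pose Zi w := Z t1 w - Z 0 w; pose Bi w := B t1 w - B 0 w.
  have mZi : measurable_fun setT Zi.
    by apply: measurable_realfun.measurable_funB; [exact: mZ|exact: mZ].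
  have mBi : measurable_fun setT Bi.
    by apply: measurable_realfun.measurable_funB; [exact: mB|exact: mB].
  pose S k := [set w | k%:R < `|alpha k * (Zi w + gam) + Bi w|].
  have -> : (fun k => P ((fun w t => alpha k * Z t w + B t w) @^-1` A k))
      = (fun k => P (S k)).
    apply: funext => k; congr (P _); apply/seteqP; split => w; rewrite /A /S /=;
    have -> : incr i0 (fun t => alpha k * Z t w + B t w) + beta k
        = alpha k * (Zi w + gam) + Bi w by rewrite incrE /beta /Zi /Bi; ring.
    1,2: by [].
  have mS k : measurable (S k).
    apply: (@mset_gt _ _ _ (fun w => `|alpha k * (Zi w + gam) + Bi w|)).
    apply: measurableT_comp => //; apply: measurable_realfun.measurable_funD => //.
    apply: measurable_realfun.measurable_funM => //.
    exact: measurable_realfun.measurable_funD.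
  have -> : (fun k => P (S k)) = (fun k => 1 - P (~` S k))%E.
    apply: funext => k; rewrite -[in LHS](setCK (S k)) probability_setC //.
    exact: measurableC.
  rewrite -[X in _ --> X](sube0 1%E); apply: cvgeB => //; first exact: cvg_cst.
  pose U1 k := [set w | k%:R < `|Bi w|].
  pose U2 k := [set w | `|Zi w - - gam| <= 2 / k.+1%:R].
  have mU1 k : measurable (U1 k) by apply: mset_gt; exact: measurableT_comp.
  have mU2 k : measurable (U2 k).
    apply: (@mset_le _ _ _ (fun w => `|Zi w - - gam|)).
    apply: measurableT_comp => //; exact: measurable_realfun.measurable_funB.
  apply: (@squeeze_cvge _ _ _ _ (fun _ => 0%E) _ (fun k => P (U1 k) + P (U2 k))%E).
  - apply: filterE => k; rewrite measure_ge0 /=.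
    apply: le_trans (measureU2 _ (mU1 k) (mU2 k)).
    apply: le_measure; rewrite ?inE; [exact: measurableC|exact: measurableU|].
    move=> w /= /negP; rewrite -leNgt => hw.
    have [h1|h1] := ltP (k%:R) `|Bi w|; [by left|right].
    rewrite /U2 /= opprK; set y := Zi w + gam; set b := Bi w.
    have h2 : `|alpha k * y| <= 2 * k%:R.
      have := ler_normD (alpha k * y + b) (- b); rewrite addrK normrN => h.
      by apply: (le_trans h); rewrite mulr2n mulrDl mul1r lerD.
    rewrite normrM ger0_norm ?exprn_ge0 // /alpha in h2.
    rewrite ler_pdivlMr ?ltr0n //.
    rewrite -addn1 natrD in h2 *.
    exact: arith_aux (ler0n R k) (normr_ge0 y) h2.
  - exact: cvg_cst.
  - rewrite -[X in _ --> X](adde0 0%E); apply: cvgeD => //.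
      exact: tail_cvg.
    apply: ball_cvg => //.
    exact: zinc_atom hZ.
- case: hW => mW _ _.
  have mWi : measurable_fun setT (fun w => W t1 w - W 0 w).
    by apply: measurable_realfun.measurable_funB; [exact: mW|exact: mW].
  have -> : (fun k => P' ((fun w t => W t w - mu * alpha k / sigma * t) @^-1` A k))
      = (fun k : nat => P' [set w | k%:R < `|W t1 w - W 0 w|]).
    apply: funext => k; congr (P' _); apply/seteqP; split => w; rewrite /A /=;
    have -> : incr i0 (fun t => W t w - mu * alpha k / sigma * t) + beta k
        = W t1 w - W 0 w by rewrite incrE /beta /gam; field; rewrite gt_eqF.
    1,2: by [].
  exact: tail_cvg.
Qed.
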